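(* Let $F_i=F$ for all $i\in[A]$, suppose $\sum_{k\ge1}1/F(k)=\infty$ and that $L(k):=F(k)/k$ is increasing. Then there is an almost surely finite random constant $c>0$ such that $\chi_i(n)\ge e^{-cL(n)}$ for all $n\ge1$ and all $i\in[A]$.
   Context: Fix $A\ge2$, $[A]=\{1,\dots,A\}$. The generalized Pólya urn with feedback $F:\mathbb{N}\to(0,\infty)$ is the Markov chain $X(n)\in\mathbb{N}^A$ with $X_i(0)\ge1$ and $\mathbb{P}(X(n+1)=X(n)+e^{(i)}\mid X(n))=F(X_i(n))/\sum_jF(X_j(n))$; $N=\sum_jX_j(0)$ and $\chi_i(n)=X_i(n)/(N+n)$. *)

(* Defs.v *)
From HB Require Import structures.
From mathcomp Require Import all_boot all_order all_algebra.
From mathcomp Require Import all_classical all_reals all_analysis.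
Set Implicit Arguments. Unset Strict Implicit. Unset Printing Implicit Defensive.
Import Order.TTheory GRing.Theory Num.Theory.
Local Open Scope classical_set_scope.
Local Open Scope ring_scope.

(* Urn configurations: X(n) in N^A, indexed by 'I_A = [A] (0-based). *)
Definition config (A : nat) := {ffun 'I_A -> nat}.

Definition add_ball (A : nat) (x : config A) (i : 'I_A) : config A :=
  [ffun j => (x j + (j == i))%N].

Definition urn_step_prob (R : realType) (A : nat) (F : nat -> R)
  (x : config A) (i : 'I_A) : R :=
  F (x i) / \sum_(j < A) F (x j).

Definition history_event (T : Type) (A : nat) (X : nat -> T -> config A)
  (h : nat -> config A) (n : nat) : set T :=
  [set w | forall k, (k <= n)%N -> X k w = h k].

(* X is (on the probability space P) a generalized Polya urn with feedback F
   and (deterministic) initial configuration x0: every X n is a discrete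
   random variable, X 0 = x0, and for every history h of length n+1 and every
   colour i, P(X(0..n) = h(0..n), X(n+1) = h n + e^(i))
            = F(h_n i)/sum_j F(h_n j) * P(X(0..n) = h(0..n)).
   (Since these probabilities sum to 1 over i, this determines the law of the
   Markov chain.) *)
Definition is_gen_polya_urn (d : measure_display) (T : measurableType d)
  (R : realType) (P : probability T R) (A : nat) (F : nat -> R)
  (x0 : config A) (X : nat -> T -> config A) : Prop :=
  [/\ (forall n x, measurable [set w | X n w = x]),
      (forall w, X 0%N w = x0) &
      (forall (h : nat -> config A) (n : nat) (i : 'I_A),
        P (history_event X h n `&` [set w | X n.+1 w = add_ball (h n) i])
        = ((urn_step_prob F (h n) i)%:E * P (history_event X h n))%E)].

Definition chi (R : realType) (A : nat) (x0 : config A) (xn : config A)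
  (n : nat) (i : 'I_A) : R :=
  (xn i)%:R / (\sum_(j < A) x0 j + n)%N%:R.

(* Main.v *)
Require Import Defs.
From HB Require Import structures.
From mathcomp Require Import all_boot all_order all_algebra.
From mathcomp Require Import all_classical all_reals all_analysis.
From mathcomp Require Import ring lra.
Import Order.TTheory GRing.Theory Num.Theory.
Local Open Scope classical_set_scope.
Local Open Scope ring_scope.


Section Comb.
Variables (R : realType) (A : nat) (F : nat -> R).
Hypothesis HA : (2 <= A)%N.
Hypothesis HF : forall k, (1 <= k)%N -> 0 < F k.
Hypothesis HL : forall m n, (1 <= m)%N -> (m <= n)%N -> F m / m%:R <= F n / n%:R.

Definition Phi (k : nat) : R := \sum_(l < k) (F l)^-1.
Definition kap : R := 2 / (F 1 ^+ 2).
Definition Zc (c : config A) : R :=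
  \sum_(i < A) \sum_(j < A) (Phi (c j) - Phi (c i)) ^+ 2
  + (2 * A%:R - 2) * kap * \sum_(b < A) ((c b)%:R)^-1.

Lemma sum_ind (a : 'I_A) (f : 'I_A -> R) :
  \sum_(b < A) (b == a)%:R * f b = f a.
Proof.
rewrite (bigD1 a) //= eqxx mul1r big1 ?addr0 // => b /negbTE ->.
by rewrite mul0r.
Qed.

Lemma sqdiff_id (u : 'I_A -> R) :
  \sum_(i < A) \sum_(j < A) (u j - u i) ^+ 2 =
  2 * A%:R * \sum_(b < A) u b ^+ 2 - 2 * (\sum_(b < A) u b) ^+ 2.
Proof.
have E : forall i, \sum_(j < A) (u j - u i) ^+ 2 =
   \sum_(j < A) u j ^+ 2 - 2 * (u i * \sum_(j < A) u j) + A%:R * u i ^+ 2.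
  move=> i; rewrite [u i * _]mulr_sumr mulr_sumr.
  have -> : A%:R * u i ^+ 2 = \sum_(j < A) u i ^+ 2.
    by rewrite sumr_const card_ord mulr_natl.
  rewrite -sumrB -big_split /=; apply: eq_bigr => j _; ring.
rewrite (eq_bigr _ (fun i _ => E i)) big_split /= sumrB /=.
rewrite sumr_const card_ord -!mulr_sumr -mulr_suml -mulr_natl; ring.
Qed.

Lemma sum_bump (g : nat -> R) (c : config A) (a : 'I_A) :
  \sum_(b < A) g (add_ball c a b) = \sum_(b < A) g (c b) + (g (c a).+1 - g (c a)).
Proof.
rewrite (bigD1 a) //= [in RHS](bigD1 a) //= ffunE eqxx addn1.
rewrite (eq_bigr (fun b => g (c b))); last first.
  by move=> b /negbTE hb; rewrite ffunE hb addn0.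
ring.
Qed.

Lemma PhiS k : Phi k.+1 = Phi k + (F k)^-1.
Proof. by rewrite /Phi big_ord_recr. Qed.

Lemma F1pos : 0 < F 1. Proof. exact: HF. Qed.

Lemma Fge k : (1 <= k)%N -> F 1 * k%:R <= F k.
Proof.
move=> hk; have := HL 1 k (leqnn 1) hk; rewrite divr1.
have kp : 0 < k%:R :> R by rewrite ltr0n.
by rewrite ler_pdivlMr.
Qed.

Lemma Ea_le0 k : (1 <= k)%N ->
  (F k)^-1 ^+ 2 + kap * ((k.+1)%:R^-1 - (k%:R)^-1) <= 0.
Proof.
move=> hk; have := Fge k hk; have g0 := F1pos.
have x1 : 1 <= k%:R :> R by rewrite ler1n.
set f := F k; set g := F 1; set x := k%:R.
move=> hf.
have f0 : 0 < f by apply: lt_le_trans hf; apply: mulr_gt0 => //; lra.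
have -> : kap * ((k.+1)%:R^-1 - x^-1) = - (g ^+ 2 * x * (x + 1) / 2)^-1.
  rewrite /kap -/g -addn1 natrD -/x; field.
  by apply/and3P; split; apply/lt0r_neq0; rewrite /g /x; lra.
rewrite subr_le0 exprVn.
have -> : f ^- 2 = (f ^+ 2)^-1 by [].
have gx0 : 0 <= g * x by apply: mulr_ge0; rewrite /g /x; lra.
have h1 : (g * x) * (g * x) <= f * f by nra.
have h2 : x * (x + 1) / 2 <= x * x by rewrite /x; nra.
have h3 : 0 <= g ^+ 2 by apply: sqr_ge0.
have h4 : g ^+ 2 * (x * (x + 1) / 2) <= g ^+ 2 * (x * x) by apply: ler_wpM2l.
rewrite lef_pV2 ?posrE.
- rewrite expr2 in h3 h4 *; rewrite expr2; nra.
- by apply: exprn_gt0.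
- apply: divr_gt0 => //; apply: mulr_gt0; last (rewrite /x; lra).
  by apply: mulr_gt0; [apply: exprn_gt0|rewrite /x; lra].
Qed.

Lemma Zc_bump (c : config A) (a : 'I_A) :
  Zc (add_ball c a) = Zc c
   + (4 * A%:R * Phi (c a) - 4 * \sum_(b < A) Phi (c b)) * (F (c a))^-1
   + (2 * A%:R - 2) * ((F (c a))^-1 ^+ 2
                       + kap * (((c a).+1)%:R^-1 - ((c a)%:R)^-1)).
Proof.
rewrite /Zc (sqdiff_id (fun b => Phi (add_ball c a b))) (sqdiff_id (fun b => Phi (c b))).
rewrite (sum_bump (fun k => Phi k ^+ 2)) (sum_bump Phi) (sum_bump (fun k => (k%:R)^-1)).
rewrite PhiS; ring.
Qed.

Lemma Spos (c : config A) : (forall b, (1 <= c b)%N) -> 0 < \sum_(b < A) F (c b).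
Proof.
move=> hc; have i0 : 'I_A by exists 0%N; apply: leq_trans HA.
rewrite (bigD1 i0) //=.
have h1 : 0 < F (c i0) by apply: HF.
have h2 : 0 <= \sum_(i < A | i != i0) F (c i).
  by apply: sumr_ge0 => i _; apply/ltW/HF.
lra.
Qed.

Lemma sum_p (c : config A) : (forall b, (1 <= c b)%N) ->
  \sum_(a < A) urn_step_prob F c a = 1.
Proof.
move=> hc; rewrite /urn_step_prob -mulr_suml divff //.
exact/lt0r_neq0/Spos.
Qed.

Lemma p_ge0 (c : config A) a : (forall b, (1 <= c b)%N) -> 0 <= urn_step_prob F c a.
Proof.
move=> hc; rewrite /urn_step_prob; apply: divr_ge0; first exact/ltW/HF.
exact/ltW/Spos.
Qed.

Lemma supermart (c : config A) : (forall b, (1 <= c b)%N) ->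
  \sum_(a < A) urn_step_prob F c a * Zc (add_ball c a) <= Zc c.
Proof.
move=> hc; set S := \sum_(b < A) F (c b).
have S0 : 0 < S by apply: Spos.
have E : forall a, urn_step_prob F c a * Zc (add_ball c a) =
   urn_step_prob F c a * Zc c
   + (4 * A%:R * Phi (c a) - 4 * \sum_(b < A) Phi (c b)) / S
   + urn_step_prob F c a * ((2 * A%:R - 2) * ((F (c a))^-1 ^+ 2
                       + kap * (((c a).+1)%:R^-1 - ((c a)%:R)^-1))).
  move=> a; rewrite Zc_bump /urn_step_prob -/S.
  have Fa : F (c a) != 0 by apply/lt0r_neq0/HF.
  have ca : 1 <= (c a)%:R :> R by rewrite ler1n.
  field; apply/and4P; split => //; apply/lt0r_neq0 => //; lra.
rewrite (eq_bigr _ (fun a _ => E a)) !big_split /= -mulr_suml sum_p // mul1r.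
have -> : \sum_(i < A) (4 * A%:R * Phi (c i) - 4 * \sum_(b < A) Phi (c b)) / S = 0.
  rewrite -mulr_suml sumrB -mulr_sumr sumr_const card_ord -mulr_natl; field.
  exact/lt0r_neq0.
rewrite addr0 -[X in _ <= X]addr0 lerD2l.
apply: sumr_le0 => a _; apply: mulr_ge0_le0; first exact: p_ge0.
apply: mulr_ge0_le0; last exact: Ea_le0.
have : (2 <= A)%N := HA; rewrite -(ler_nat R) => h; lra.
Qed.

Lemma Zc_ge0 (c : config A) : 0 <= Zc c.
Proof.
rewrite /Zc; apply: addr_ge0.
  by apply: sumr_ge0 => i _; apply: sumr_ge0 => j _; apply: sqr_ge0.
apply: mulr_ge0; last by apply: sumr_ge0 => b _; rewrite invr_ge0.
apply: mulr_ge0; last by rewrite /kap; apply: divr_ge0 => //; apply: sqr_ge0.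
have : (2 <= A)%N := HA; rewrite -(ler_nat R) => h; lra.
Qed.

Definition cfgs (c : config A) (s : seq 'I_A) : config A := foldl (@add_ball A) c s.
Fixpoint piw (c : config A) (s : seq 'I_A) : R :=
  if s is i :: s' then urn_step_prob F c i * piw (add_ball c i) s' else 1.
Fixpoint allseq (n : nat) : seq (seq 'I_A) :=
  if n is n'.+1 then [seq i :: s | i <- index_enum 'I_A, s <- allseq n'] else [:: [::]].

Variable lam : R.
Fixpoint bad (c : config A) (s : seq 'I_A) : bool :=
  (lam <= Zc c) || (if s is i :: s' then bad (add_ball c i) s' else false).
Fixpoint Yf (c : config A) (s : seq 'I_A) : R :=
  if lam <= Zc c then Zc c else if s is i :: s' then Yf (add_ball c i) s' else Zc c.

Lemma ge1_add (c : config A) i : (forall b, (1 <= c b)%N) -> forall b, (1 <= add_ball c i b)%N.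
Proof. by move=> hc b; rewrite ffunE; apply: leq_trans (hc b) (leq_addr _ _). Qed.

Lemma piw_ge0 s : forall c : config A, (forall b, (1 <= c b)%N) -> 0 <= piw c s.
Proof.
elim: s => [|i s IH] c hc /=; first exact: ler01.
apply: mulr_ge0; first exact: p_ge0.
exact/IH/ge1_add.
Qed.

Lemma piw_sum n : forall c : config A, (forall b, (1 <= c b)%N) ->
  \sum_(s <- allseq n) piw c s = 1.
Proof.
elim: n => [|n IH] c hc /=; first by rewrite big_seq1.
rewrite big_allpairs_dep /= -(sum_p c hc); apply: eq_bigr => i _.
by rewrite -mulr_sumr IH ?mulr1 //; apply: ge1_add.
Qed.

Lemma Yf_ge0 s : forall c, 0 <= Yf c s.
Proof.
elim: s => [|i s IH] c /=; first by case: ifP => _; apply: Zc_ge0.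
by case: ifP => _; [apply: Zc_ge0|apply: IH].
Qed.

Lemma bad_Yf s : forall c, bad c s -> lam <= Yf c s.
Proof.
elim: s => [|i s IH] c /=; first by rewrite orbF => h; rewrite h.
by case: ifP => // _ /= /IH.
Qed.

Lemma max_ineq n : forall c : config A, (forall b, (1 <= c b)%N) ->
  \sum_(s <- allseq n) piw c s * Yf c s <= Zc c.
Proof.
elim: n => [|n IH] c hc /=.
  by rewrite big_seq1 /= mul1r; case: ifP.
rewrite big_allpairs_dep /=.
case hz: (lam <= Zc c).
  rewrite le_eqVlt; apply/orP; left; apply/eqP; rewrite -[RHS]mul1r -(sum_p c hc) mulr_suml; apply: eq_bigr => i _.
  rewrite -[RHS]mul1r -(piw_sum n (add_ball c i) (ge1_add c i hc)) !mulr_suml.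
  by apply: eq_bigr => s _; ring.
apply: le_trans (supermart c hc); apply: ler_sum => i _.
rewrite (eq_bigr (fun s => urn_step_prob F c i * (piw (add_ball c i) s * Yf (add_ball c i) s))).
  rewrite -mulr_sumr; apply: ler_wpM2l; first exact: p_ge0.
  exact/IH/ge1_add.
by move=> s _; rewrite mulrA.
Qed.

Lemma bad_ineq n (c : config A) : (forall b, (1 <= c b)%N) ->
  lam * \sum_(s <- allseq n | bad c s) piw c s <= Zc c.
Proof.
move=> hc; apply: le_trans (max_ineq n c hc).
rewrite mulr_sumr big_mkcond /=; apply: ler_sum => s _.
case: ifP => hb.
  by rewrite mulrC; apply: ler_wpM2l; [apply: piw_ge0|apply: bad_Yf].
by apply: mulr_ge0; [apply: piw_ge0|apply: Yf_ge0].
Qed.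

Lemma cfgs_rcons c s i : cfgs c (rcons s i) = add_ball (cfgs c s) i.
Proof. by rewrite /cfgs foldl_rcons. Qed.

Lemma piw_rcons s : forall c i, piw c (rcons s i) = piw c s * urn_step_prob F (cfgs c s) i.
Proof.
elim: s => [|j s IH] c i /=; first by rewrite mulr1 mul1r.
by rewrite IH mulrA.
Qed.

Lemma notbad s : forall c, ~~ bad c s -> forall k, (k <= size s)%N ->
  Zc (cfgs c (take k s)) < lam.
Proof.
elim: s => [|i s IH] c /=; rewrite negb_or => /andP[h1 h2] k hk.
  by case: k hk => //= _; rewrite ltNge.
case: k hk => [|k] hk /=; first by rewrite ltNge.
exact: IH.
Qed.

Lemma bad_ex s : forall c, bad c s -> exists k, (k <= size s)%N /\
  lam <= Zc (cfgs c (take k s)).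
Proof.
elim: s => [|i s IH] c /=.
  by rewrite orbF => h; exists 0%N.
case/orP => [h|/IH [k [hk h]]]; first by exists 0%N.
by exists k.+1.
Qed.

Lemma ex_bad s : forall c k, (k <= size s)%N -> lam <= Zc (cfgs c (take k s)) -> bad c s.
Proof.
elim: s => [|i s IH] c [|k] //= hk h; rewrite ?h //.
by rewrite (IH _ k hk h) orbT.
Qed.

Lemma cfgs_ge1 s : forall c : config A, (forall b, (1 <= c b)%N) ->
  forall b, (1 <= cfgs c s b)%N.
Proof.
elim: s => [|i s IH] c hc //=.
exact/IH/ge1_add.
Qed.

Lemma cfgs_sum s : forall c : config A,
  (\sum_(b < A) cfgs c s b = \sum_(b < A) c b + size s)%N.
Proof.
elim: s => [|i s IH] c /=; first by rewrite addn0.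
rewrite IH (bigD1 i) //= [X in (_ = X + _)%N](bigD1 i) //= ffunE eqxx.
rewrite (eq_bigr (fun b => c b)); last by move=> b /negbTE hb; rewrite ffunE hb addn0.
by rewrite /= addn1 !addSn addnS.
Qed.

Lemma add_ball_inj (c : config A) i j : add_ball c i = add_ball c j -> i = j.
Proof.
move=> h; have := congr1 (fun f : config A => f i) h; rewrite /= !ffunE eqxx => /eqP.
by rewrite eqn_add2l; case: (i =P j).
Qed.

Lemma path_inj s : forall s' c, size s = size s' ->
  (forall k, (k <= size s)%N -> cfgs c (take k s) = cfgs c (take k s')) -> s = s'.
Proof.
elim: s => [|i s IH] [|j s'] c //= [hs] h.
have hij : i = j.
  by have := h 1%N isT; rewrite /= !take0 /cfgs /=; apply: add_ball_inj.
subst j; congr cons; apply: (IH s' (add_ball c i) hs) => k hk.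
exact: (h k.+1 hk).
Qed.

Lemma allseq_size n s : s \in allseq n -> size s = n.
Proof.
elim: n s => [|n IH] s /=; first by rewrite inE => /eqP ->.
by case/allpairsP => -[i t] /= [_ /IH ht ->] /=; rewrite ht.
Qed.

Lemma allseq_complete s : s \in allseq (size s).
Proof.
elim: s => [|i s IH] /=; first by rewrite inE.
exact: (allpairs_f (fun i s => i :: s) (mem_index_enum i) IH).
Qed.

Lemma allseq_uniq n : uniq (allseq n).
Proof.
elim: n => [|n IH] //=.
apply: allpairs_uniq => //; first exact: index_enum_uniq.
by move=> [i s] [j t] _ _ /= [-> ->].
Qed.

End Comb.
Arguments Phi {R} F k.
Arguments kap {R} F.
Arguments Zc {R A} F c.
Arguments cfgs {A} c s.
Arguments piw {R A} F c s.
Arguments allseq {A} n.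
Arguments bad {R A} F lam c s.
Arguments Yf {R A} F lam c s.
Arguments allseq_size {A n s}.
Arguments bad_ex {R A F lam s c}.
Arguments ex_bad {R A F lam s c k}.
Arguments notbad {R A F lam s c}.
Arguments cfgs_ge1 {A s c}.
Arguments allseq_complete {A} s.


Section Det.
Variables (R : realType) (A : nat) (F : nat -> R).
Hypothesis HA : (2 <= A)%N.
Hypothesis HF : forall k, (1 <= k)%N -> 0 < F k.
Hypothesis HL : forall m n, (1 <= m)%N -> (m <= n)%N -> F m / m%:R <= F n / n%:R.

Lemma Phi_mono a b : (1 <= a)%N -> (a <= b)%N -> Phi F a <= Phi F b.
Proof.
move=> ha; elim: b => [|b IH]; first by rewrite leqn0 => /eqP ->.
rewrite leq_eqVlt => /orP[/eqP ->//|hab].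
rewrite PhiS; apply: le_trans (IH hab) _; rewrite lerDl invr_ge0.
by apply/ltW/HF; apply: leq_trans ha hab.
Qed.

Lemma grow n k t : (1 <= k)%N -> (k + t <= n)%N ->
  (k + t)%:R <= k%:R * expR (F n / n%:R * (Phi F (k + t) - Phi F k)).
Proof.
move=> hk; elim: t => [|t IH] ht.
  by rewrite addn0 subrr mulr0 expR0 mulr1.
have ht' : (k + t <= n)%N by apply: leq_trans ht; rewrite addnS.
have := IH ht'; set m := (k + t)%N => hm.
have m1 : (1 <= m)%N by apply: leq_trans hk (leq_addr _ _).
have Fm : 0 < F m by apply: HF.
have hLm : F m / m%:R <= F n / n%:R by apply: HL => //; apply: ltnW; rewrite -addnS.
set L := F n / n%:R in hLm *.
have mpos : 0 < m%:R :> R by rewrite ltr0n.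
have hFm : F m <= m%:R * L by rewrite -ler_pdivrMl // mulrC.
rewrite addnS PhiS -/m (_ : Phi F m + (F m)^-1 - Phi F k = (Phi F m - Phi F k) + (F m)^-1); last ring.
rewrite mulrDr expRD.
set E1 := k%:R * expR (L * (Phi F m - Phi F k)) in hm *.
have h1 : 1 + L * (F m)^-1 <= expR (L * (F m)^-1) by apply: expR_ge1Dx.
have h2 : 1 <= m%:R * (L * (F m)^-1).
  by rewrite mulrA ler_pdivlMr // mul1r.
have h3 : 0 <= L * (F m)^-1.
  apply: mulr_ge0; last by rewrite invr_ge0 ltW.
  have : 0 < F m / m%:R by apply: divr_gt0.
  lra.
rewrite mulrA -/E1 -addn1 natrD.
have E1m : m%:R <= E1 := hm.
have : E1 * (1 + L * (F m)^-1) <= E1 * expR (L * (F m)^-1).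
  by apply: ler_wpM2l => //; apply: le_trans E1m; rewrite ler0n.
suff : m%:R + 1 <= E1 * (1 + L * (F m)^-1) by apply: le_trans.
nra.
Qed.

Lemma one_term (u : 'I_A -> R) i j :
  (u j - u i) ^+ 2 <= \sum_(i0 < A) \sum_(j0 < A) (u j0 - u i0) ^+ 2.
Proof.
rewrite (bigD1 i) //= (bigD1 j (P:=xpredT)) //=.
rewrite -addrA lerDl; apply: addr_ge0.
  by apply: sumr_ge0 => b _; apply: sqr_ge0.
by apply: sumr_ge0 => a _; apply: sumr_ge0 => b _; apply: sqr_ge0.
Qed.

Lemma det_bound (N : nat) (lam : R) (Y : nat -> config A) :
  (forall n b, (1 <= Y n b)%N) ->
  (forall n, (\sum_(b < A) Y n b)%N = (N + n)%N) ->
  (forall n, Zc F (Y n) < lam) ->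
  exists c : R, 0 < c /\ forall (n : nat) (i : 'I_A), (1 <= n)%N ->
    expR (- (c * (F n / n%:R))) <= (Y n i)%:R / (N + n)%:R.
Proof.
move=> hY1 hYs hZ.
have lam0 : 0 <= lam by apply: le_trans (ltW (hZ 0%N)); apply: Zc_ge0.
have F1 : 0 < F 1 by apply: HF.
set s := 1 + lam.
exists (s + ((N.+1 * A)%:R / F 1)); split.
  by apply: ltr_wpDr; [apply: divr_ge0; rewrite ?ler0n ?ltW|rewrite /s; lra].
move=> n i hn.
set L := F n / n%:R.
have hL1 : F 1 <= L by have := HL 1 n (leqnn 1) hn; rewrite divr1.
set y := Y n.
have hdiff : forall a b, Phi F (y b) - Phi F (y a) <= s.
  move=> a b; have := le_lt_trans (one_term (fun b => Phi F (y b)) a b) _.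
  move=> /(_ lam); rewrite /s.
  have hz := hZ n; rewrite /Zc in hz.
  have hk : 0 <= (2 * A%:R - 2) * kap F * \sum_(b0 < A) ((y b0)%:R)^-1.
    apply: mulr_ge0; last by apply: sumr_ge0 => b0 _; rewrite invr_ge0.
    apply: mulr_ge0; last by rewrite /kap; apply: divr_ge0 => //; apply: sqr_ge0.
    have : (2 <= A)%N := HA; rewrite -(ler_nat R) => h; lra.
  move=> /(_ ltac:(lra)) h; nra.
have i0 := i.
have [j _ hjmax] := @arg_maxnP _ i xpredT (fun b => y b) isT.
set M := y j.
have hAM : (n <= A * M)%N.
  apply: leq_trans (leq_addl N n) _; rewrite -hYs.
  rewrite -[X in (_ <= X * _)%N]card_ord -sum_nat_const; apply: leq_sum => b _.
  exact: hjmax.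
set k := y i.
have k1 : (1 <= k)%N by apply: hY1.
have hkey : n%:R <= A%:R * k%:R * expR (L * s) :> R.
  have e1 : 1 <= expR (L * s).
    apply: le_trans (expR_ge1Dx _); rewrite lerDl; apply: mulr_ge0; rewrite /s; lra.
  set n' := minn M n.
  have hAn' : (n <= A * n')%N.
    rewrite /n'; case: (leqP M n) => h; first exact: hAM.
    by rewrite leq_pmull //; apply: leq_trans HA.
  case: (leqP n' k) => hk.
    apply: le_trans (_ : A%:R * k%:R <= _).
      by rewrite -natrM ler_nat; apply: leq_trans hAn' _; rewrite leq_mul2l hk orbT.
    rewrite -[leLHS]mulr1; apply: ler_wpM2l => //; apply: mulr_ge0; rewrite ler0n.
  have hn'n : (n' <= n)%N by apply: geq_minr.
  have hkn' : (k <= n')%N by apply: ltnW.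
  have hg := grow n k (n' - k)%N k1 ltac:(by rewrite subnKC).
  rewrite subnKC // in hg.
  have hP : Phi F n' - Phi F k <= s.
    apply: le_trans (hdiff i j); rewrite lerD2r; apply: Phi_mono.
      by apply: leq_trans k1 (ltnW hk).
    exact: geq_minl.
  have L0 : 0 <= L by lra.
  have hg2 : n'%:R <= k%:R * expR (L * s) :> R.
    apply: le_trans hg _; apply: ler_wpM2l; first by rewrite ler0n.
    by rewrite ler_expR; apply: ler_wpM2l.
  apply: le_trans (_ : A%:R * n'%:R <= _).
    by rewrite -natrM ler_nat.
  rewrite -mulrA; apply: ler_wpM2l; rewrite ?ler0n //.
have kpos : 0 < k%:R :> R by rewrite ltr0n.
have Nn : 0 < (N + n)%:R :> R by rewrite ltr0n addn_gt0 hn orbT.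
have e2 : (N.+1 * A)%:R <= expR ((N.+1 * A)%:R / F 1 * L).
  apply: le_trans (expR_ge1Dx _).
  have : 1 <= L / F 1 by rewrite ler_pdivlMr // mul1r.
  have h0 : 0 <= (N.+1 * A)%:R :> R by rewrite ler0n.
  move=> h.
  have -> : (N.+1 * A)%:R / F 1 * L = (N.+1 * A)%:R * (L / F 1) by rewrite mulrAC mulrA.
  have : (N.+1 * A)%:R * 1 <= (N.+1 * A)%:R * (L / F 1) :> R by apply: ler_wpM2l.
  lra.
have hNn : (N + n)%:R <= N.+1%:R * n%:R :> R.
  rewrite -natrM ler_nat mulSn; rewrite addnC leq_add2l.
  by rewrite -{1}(muln1 N) leq_mul2l hn orbT.
rewrite expRN mulrDl expRD.
have p1 := expR_gt0 (s * L); have p2 := expR_gt0 ((N.+1 * A)%:R / F 1 * L).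
rewrite -[X in _ <= X]invrK invf_div lef_pV2; last first.
- by rewrite posrE; apply: divr_gt0.
- by rewrite posrE; apply: mulr_gt0.
rewrite ler_pdivrMr // (mulrC s L).
apply: le_trans hNn _.
rewrite natrM in e2.
have : N.+1%:R * n%:R <= N.+1%:R * (A%:R * k%:R * expR (L * s)) :> R.
  by apply: ler_wpM2l; rewrite ?ler0n.
move=> h; apply: le_trans h _.
have h0 : 0 <= expR (L * s) * k%:R by apply: mulr_ge0; rewrite ?ler0n ?expR_ge0.
have : expR (L * s) * k%:R * (N.+1%:R * A%:R) <=
       expR (L * s) * k%:R * expR ((N.+1)%:R * A%:R / F 1 * L).
  by apply: ler_wpM2l.
move=> h; rewrite natrM.
have -> : expR (L * s) * expR (N.+1%:R * A%:R / F 1 * L) * k%:R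
  = expR (L * s) * k%:R * expR (N.+1%:R * A%:R / F 1 * L) by ring.
apply: le_trans h; rewrite le_eqVlt; apply/orP; left; apply/eqP; ring.
Qed.

End Det.


Lemma take_rcons_le (T0 : Type) (s : seq T0) i k : (k <= size s)%N ->
  take k (rcons s i) = take k s.
Proof.
move=> hk; rewrite -cats1 take_cat; case: ltnP => // h.
have -> : k = size s by apply/eqP; rewrite eqn_leq hk h.
by rewrite subnn take0 cats0 take_size.
Qed.

Section Meas.
Variables (d : measure_display) (T : measurableType d) (R : realType)
  (P : probability T R) (A : nat) (F : nat -> R) (x0 : config A)
  (X : nat -> T -> config A).
Hypothesis HA : (2 <= A)%N.
Hypothesis HF : forall k, (1 <= k)%N -> 0 < F k.
Hypothesis Hx0 : forall i, (1 <= x0 i)%N.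
Hypothesis Hmeas : forall n x, measurable [set w | X n w = x].
Hypothesis HX0 : forall w, X 0%N w = x0.
Hypothesis Hstep : forall (h : nat -> config A) (n : nat) (i : 'I_A),
        P (history_event X h n `&` [set w | X n.+1 w = add_ball (h n) i])
        = ((urn_step_prob F (h n) i)%:E * P (history_event X h n))%E.

Lemma hist_meas h n : measurable (history_event X h n).
Proof.
elim: n => [|n IH].
  have -> : history_event X h 0 = [set w | X 0%N w = h 0%N] => //.
  apply/seteqP; split => w /=; first by apply.
  by move=> hw k; rewrite leqn0 => /eqP ->.
have -> : history_event X h n.+1 =
   history_event X h n `&` [set w | X n.+1 w = h n.+1].
  apply/seteqP; split => w /=.
    by move=> hw; split; [move=> k hk; apply: hw; apply: leqW|apply: hw].
  move=> [hw hn] k; rewrite leq_eqVlt => /orP[/eqP ->|hk] //.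
  exact: hw.
exact: measurableI.
Qed.

Definition Ev (s : seq 'I_A) : set T :=
  history_event X (fun k => cfgs x0 (take k s)) (size s).

Lemma Ev_prob s : P (Ev s) = (piw F x0 s)%:E.
Proof.
elim/last_ind: s => [|s i IH].
  have -> : Ev [::] = setT; last by rewrite probability_setT.
  apply/seteqP; split => w //= _ k; rewrite leqn0 => /eqP ->.
  by rewrite HX0.
set h := fun k => cfgs x0 (take k (rcons s i)).
have E1 : history_event X h (size s) = Ev s.
  apply/seteqP; split => w /= hw k hk; have := hw k hk;
  by rewrite /h take_rcons_le.
have E2 : Ev (rcons s i) =
   history_event X h (size s) `&` [set w | X (size s).+1 w = add_ball (h (size s)) i].
  rewrite /Ev size_rcons; apply/seteqP; split => w /=.
    move=> hw; split; first by move=> k hk; apply: hw; apply: leqW.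
    rewrite (hw (size s).+1) // /h /= take_oversize ?size_rcons //.
    by rewrite take_rcons_le // take_size cfgs_rcons.
  move=> [hw hn] k; rewrite leq_eqVlt => /orP[/eqP ->|hk]; last exact: hw.
  rewrite hn /h /= [take (size s).+1 _]take_oversize ?size_rcons //.
  by rewrite take_rcons_le // take_size cfgs_rcons.
rewrite E2 Hstep E1 IH -EFinM piw_rcons /h take_rcons_le // take_size.
by rewrite mulrC.
Qed.

Lemma Ev_meas s : measurable (Ev s).
Proof. exact: hist_meas. Qed.

Lemma Ev_inj s s' w : size s = size s' -> Ev s w -> Ev s' w -> s = s'.
Proof.
move=> hs h1 h2; apply: (@path_inj A s s' x0 hs) => k hk.
by rewrite -h1 // h2 // -hs.
Qed.

Definition U (Q : seq (seq 'I_A)) : set T := [set w | exists2 s, s \in Q & Ev s w].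

Lemma U_meas Q : measurable (U Q).
Proof.
elim: Q => [|q Q IH].
  have -> : U [::] = set0 by apply/seteqP; split => w //= [s].
  exact: measurable0.
have -> : U (q :: Q) = Ev q `|` U Q.
  apply/seteqP; split => w /=.
    by move=> [s]; rewrite inE => /orP[/eqP ->|hs] hw; [left|right; exists s].
  by move=> [hw|[s hs hw]]; [exists q; rewrite ?inE ?eqxx|exists s; rewrite ?inE ?hs ?orbT].
exact: measurableU (Ev_meas q) IH.
Qed.

Lemma U_prob n Q : uniq Q -> (forall s, s \in Q -> size s = n) ->
  P (U Q) = (\sum_(s <- Q) piw F x0 s)%:E.
Proof.
elim: Q => [|q Q IH] /=.
  move=> _ _; have -> : U [::] = set0 by apply/seteqP; split => w //= [s].
  by rewrite measure0 big_nil.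
move=> /andP[qQ uQ] hsz.
have -> : U (q :: Q) = Ev q `|` U Q.
  apply/seteqP; split => w /=.
    by move=> [s]; rewrite inE => /orP[/eqP ->|hs] hw; [left|right; exists s].
  by move=> [hw|[s hs hw]]; [exists q; rewrite ?inE ?eqxx|exists s; rewrite ?inE ?hs ?orbT].
rewrite measureU; [|exact: Ev_meas|exact: U_meas|]; last first.
  apply/seteqP; split => w //= [hq [s hs hw]].
  have hqs : q = s by apply: (Ev_inj q s w _ hq hw); rewrite !hsz ?inE ?eqxx ?hs ?orbT.
  by move: qQ; rewrite hqs hs.
rewrite [X in (X + _)%E](_ : _ = (piw F x0 q)%:E); last exact: Ev_prob.
rewrite [X in (_ + X)%E](_ : _ = (\sum_(s <- Q) piw F x0 s)%:E).
  by rewrite big_cons EFinD.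
by apply: IH => // s hs; apply: hsz; rewrite inE hs orbT.
Qed.

Hypothesis HL : forall m n, (1 <= m)%N -> (m <= n)%N -> F m / m%:R <= F n / n%:R.

Definition G n : set T := U (allseq n).

Lemma G_prob n : P (G n) = 1%E.
Proof.
rewrite /G (U_prob n) ?allseq_uniq //; last by move=> s; apply: allseq_size.
by rewrite piw_sum.
Qed.

Definition Bd (lam : R) n : set T := U [seq s <- allseq n | bad F lam x0 s].

Lemma Bd_prob lam n : 0 < lam -> (P (Bd lam n) <= (Zc F x0 / lam)%:E)%E.
Proof.
move=> lam0; rewrite /Bd (U_prob n).
- rewrite lee_fin big_filter ler_pdivlMr // mulrC.
  exact: bad_ineq.
- by rewrite filter_uniq ?allseq_uniq.
- by move=> s; rewrite mem_filter => /andP[_]; apply: allseq_size.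
Qed.

Definition Dset lam n : set T := Bd lam n `|` ~` G n.

Lemma Dset_meas lam n : measurable (Dset lam n).
Proof. by apply: measurableU; [apply: U_meas|apply: measurableC; apply: U_meas]. Qed.

Lemma Dset_prob lam n : 0 < lam -> (P (Dset lam n) <= (Zc F x0 / lam)%:E)%E.
Proof.
move=> lam0; rewrite /Dset measureU0; first exact: Bd_prob.
- exact: U_meas.
- exact/measurableC/U_meas.
transitivity (1 - P (G n))%E; first exact: probability_setC (U_meas _).
by rewrite (_ : P (G n) = 1%E) ?subee //; exact: G_prob.
Qed.

Lemma G_prefix n w : G n.+1 w -> G n w.
Proof.
move=> [s' hs' hw]; have sz := allseq_size hs'.
exists (take n s').
  by have := allseq_complete (take n s'); rewrite size_takel // sz.
rewrite /Ev size_takel ?sz // => k hk.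
by rewrite take_takel // hw // sz; apply: leqW.
Qed.

Lemma Dset_incr lam n : Dset lam n `<=` Dset lam n.+1.
Proof.
move=> w [[s]|hg]; last by right => /G_prefix.
rewrite mem_filter => /andP[hb hs] hw.
have [hg|hg] := pselect (G n.+1 w); last by right.
left; case: hg => s' hs' hw'.
exists s'; last by [].
rewrite mem_filter hs' andbT.
have [k [hk hz]] := bad_ex hb.
apply: (ex_bad (k := k)).
  by rewrite (allseq_size hs'); apply: leq_trans hk _; rewrite (allseq_size hs).
by rewrite -hw' // ?(allseq_size hs') ?hw //; apply: leq_trans hk _; rewrite (allseq_size hs).
Qed.

Let D lam n := Dset lam n.

Lemma bigD_prob lam : 0 < lam ->
  (P (\bigcup_n D lam n) <= (Zc F x0 / lam)%:E)%E.
Proof.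
move=> lam0.
have mD : forall n, measurable (D lam n) by move=> n; apply: Dset_meas.
have mU := bigcupT_measurable _ mD.
have hom : {homo D lam : n m / (n <= m)%N >-> (n <= m)%O}.
  move=> n m; elim: m => [|m IH]; first by rewrite leqn0 => /eqP ->.
  rewrite leq_eqVlt => /orP[/eqP ->//|hnm].
  rewrite subsetEset; apply: subset_trans (Dset_incr _ _); rewrite -subsetEset.
  exact: IH.
have cv := nondecreasing_cvg_mu (mu := P) mD mU hom.
rewrite -(cvg_lim _ cv) //; apply: lime_le; first exact: cvgP cv.
apply: nearW => n /=; exact: Dset_prob.
Qed.

Definition Nset : set T := \bigcap_m \bigcup_n D (m.+1%:R) n.

Lemma Nset_meas : measurable Nset.
Proof.
apply: bigcapT_measurable => m; apply: bigcupT_measurable => n; exact: Dset_meas.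
Qed.

Lemma Nset_prob : P Nset = 0%E.
Proof.
have hle : forall m : nat, (P Nset <= (Zc F x0 / m.+1%:R)%:E)%E.
  move=> m; apply: le_trans _ (bigD_prob _ _); last by rewrite ltr0Sn.
  apply: le_measure; rewrite ?inE.
  - exact: Nset_meas.
  - by apply: bigcupT_measurable => n; exact: Dset_meas.
  by move=> w hw; apply: hw.
have h0 : (0 <= P Nset)%E := measure_ge0 _ _.
move: h0 hle; case: (P Nset) => [r| |] //; last by move=> _ /(_ 0%N).
rewrite lee_fin => r0 hle; congr (_%:E); apply/eqP; rewrite eq_le r0 andbT.
rewrite leNgt; apply/negP => rpos.
have h1 := truncnS_gt (Zc F x0 / r).
have := hle (Num.truncn (Zc F x0 / r)); rewrite lee_fin.
set m := (Num.truncn (Zc F x0 / r)).+1%:R in h1 *.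
have m0 : 0 < m by rewrite /m ltr0Sn.
rewrite ler_pdivlMr // => h2.
move: h1; rewrite ltr_pdivrMr // => h1.
have : r * m < m * r by apply: le_lt_trans h2 h1.
by rewrite mulrC ltxx.
Qed.

Lemma final_ae : {ae P, forall w, exists c : R, 0 < c /\
     forall (n : nat) (i : 'I_A), (1 <= n)%N ->
       expR (- (c * (F n / n%:R))) <= @chi R A x0 (X n w) n i}.
Proof.
exists Nset; split; [exact: Nset_meas|exact: Nset_prob|].
move=> w /= nq; apply: contrapT => hn; apply: nq.
have [m hm] : exists m : nat, ~ (\bigcup_n D (m.+1%:R) n) w.
  apply: contrapT => h; apply: hn => m _; apply: contrapT => h'; apply: h.
  by exists m.
have hG : forall n, exists2 s, s \in allseq n & Ev s w /\ ~~ bad F (m.+1%:R) x0 s.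
  move=> n; have hg : G n w.
    by apply: contrapT => hg; apply: hm; exists n => //; right.
  case: hg => s hs hw; exists s => //; split => //; apply/negP => hb.
  by apply: hm; exists n => //; left; exists s => //; rewrite mem_filter hb hs.
have hX : forall n, exists s, [/\ size s = n, X n w = cfgs x0 s & ~~ bad F m.+1%:R x0 s].
  move=> n; have [s hs [hw hb]] := hG n; have sz := allseq_size hs.
  exists s; split => //.
  by rewrite (hw n); [rewrite -sz take_size|rewrite sz].
apply: (@det_bound R A F HA HF HL (\sum_(j < A) x0 j) m.+1%:R (fun n => X n w)).
- by move=> n b; have [s [_ -> _]] := hX n; exact: cfgs_ge1.
- by move=> n; have [s [sz -> _]] := hX n; rewrite cfgs_sum sz.
- move=> n; have [s [sz -> hb]] := hX n.
  by have := notbad hb (size s) (leqnn _); rewrite take_size.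
Qed.

End Meas.

Theorem mainTheorem18 (d : measure_display) (T : measurableType d)
  (R : realType) (P : probability T R) (A : nat) (F : nat -> R)
  (x0 : config A) (X : nat -> T -> config A) :
  (2 <= A)%N ->
  (forall i, (1 <= x0 i)%N) ->
  (forall k, (1 <= k)%N -> 0 < F k) ->
  (* sum_{k >= 1} 1/F(k) = infinity *)
  ([series (F k.+1)^-1]_k @ \oo --> +oo) ->
  (* L(k) = F(k)/k is (weakly) increasing on k >= 1 *)
  (forall m n, (1 <= m)%N -> (m <= n)%N -> F m / m%:R <= F n / n%:R) ->
  is_gen_polya_urn P F x0 X ->
  {ae P, forall w, exists c : R, 0 < c /\
     forall (n : nat) (i : 'I_A), (1 <= n)%N ->
       expR (- (c * (F n / n%:R))) <= @chi R A x0 (X n w) n i}.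

Proof.
move=> HA HX0i HF _ HL [Hmeas HX0 Hstep].
exact: (@final_ae d T R P A F x0 X HA HF HX0i Hmeas HX0 Hstep HL).
Qed.
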